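(* Let $S$ be a finite set of positive integers with at least $3$ elements, and suppose there are $a,b\in S$ with $a\ne b$ and $b\mid a$. Then $\Theta(S)\le\Theta(S\setminus\{b\})$, i.e. the modulus $b$ does not increase the robustness bound and may be deleted.
   Context: For a finite set $T$ of positive integers with at least two elements, the (single-stage) robustness bound is $\Theta(T)=\max_{x\in T}\min_{y\in T,\,y\ne x}\gcd(x,y)/4$. *)

(* Defs.v *)
From mathcomp Require Import all_boot all_order all_algebra.
Set Implicit Arguments. Unset Strict Implicit. Unset Printing Implicit Defensive.
Import GRing.Theory Num.Theory.

(* A finite set T of positive integers is represented by a duplicate-free
   sequence of nats (order irrelevant).  *)

(* min_{y in T, y <> x} gcd(x,y).  The seed value x is harmless: gcd(x,y) <= x
   for x > 0, and T has at least one y <> x whenever |T| >= 2. *)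
Definition mingcd (T : seq nat) (x : nat) : nat :=
  \big[minn/x]_(y <- T | y != x) gcdn x y.

Definition Theta (T : seq nat) : rat :=
  ((\max_(x <- T) mingcd T x)%:R / 4%:R)%R.

(* Main.v *)
Require Import Defs.
From mathcomp Require Import all_boot all_order all_algebra.
Import GRing.Theory Num.Theory.

Lemma mingcd_ge c T x : (c <= mingcd T x) =
  (c <= x) && all (fun y => (y != x) ==> (c <= gcdn x y)) T.
Proof.
rewrite /mingcd; elim: T => [|y T IH]; first by rewrite big_nil andbT.
rewrite big_cons /=; case: (y != x) => /=.
  by rewrite leq_min IH; case: (c <= gcdn x y); rewrite ?andbF.
by rewrite IH.
Qed.

Lemma mingcd_le {T x y} : y \in T -> y != x -> mingcd T x <= gcdn x y.
Proof.
move=> yT yx; have := mingcd_ge (mingcd T x) T x; rewrite leqnn => /esym/andP[_ /allP H].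
by have := H y yT; rewrite yx.
Qed.

Lemma mingcd_lex T x : mingcd T x <= x.
Proof. by have := mingcd_ge (mingcd T x) T x; rewrite leqnn => /esym/andP[]. Qed.

Theorem corollary2 (S : seq nat) (a b : nat) :
  uniq S -> all (fun x => 0 < x) S -> 3 <= size S ->
  a \in S -> b \in S -> a != b -> b %| a ->
  (Theta S <= Theta (rem b S))%R.
Proof.
move=> uS /allP pos _ aS bS ab ba.
have a0 : 0 < a by exact: pos.
have aS' : a \in rem b S by rewrite mem_rem_uniq // inE ab.
rewrite /Theta ler_pM2r ?invr_gt0 ?ltr0n // ler_nat.
apply/bigmax_leqP_seq => x xS _.
case: (eqVneq x b) => [->|xb].
- apply: (@leq_trans (mingcd (rem b S) a)); last by apply: leq_bigmax_seq.
  rewrite mingcd_ge; apply/andP; split.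
    have h1 := mingcd_le aS ab; apply: (leq_trans h1).
    by rewrite (gcdn_idPl ba) dvdn_leq.
  apply/allP => y yS'; apply/implyP => ya.
  have yb : y != b by move: yS'; rewrite mem_rem_uniq // inE => /andP[].
  have yS : y \in S by apply: mem_rem yS'.
  apply: (leq_trans (mingcd_le yS yb)).
  apply: dvdn_leq; first by rewrite gcdn_gt0 a0.
  by rewrite dvdn_gcd dvdn_gcdr (dvdn_trans (dvdn_gcdl _ _) ba).
- have xS' : x \in rem b S by rewrite mem_rem_uniq // inE xb.
  apply: (@leq_trans (mingcd (rem b S) x)); last by apply: leq_bigmax_seq.
  rewrite mingcd_ge mingcd_lex /=; apply/allP => y yS'; apply/implyP => yx.
  exact: mingcd_le (mem_rem yS') yx.
Qed.
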